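(* Let $\Omega\subset\mathbb{R}^N$ be an open domain, let $g:\mathbb{R}^N\setminus\Omega\to\mathbb{R}$, and let $\mathcal{A}:\Omega\times\mathcal{X}\times\mathbb{R}\to\mathbb{R}$ satisfy assumptions (a), (b), (c) below, with associated operator $\mathfrak{a}$ and extensions $\overline{\mathfrak{a}},\underline{\mathfrak{a}},\overline{\mathcal{A}},\underline{\mathcal{A}}$. Let $u\in\overline{\mathcal{X}}$ with $u\ge g$ on $\mathbb{R}^N\setminus\Omega$. Then the following are equivalent: (i) for every $x\in\Omega$, $\mathcal{A}(x,\varphi,u(x))\ge0$ (equivalently $u(x)\ge\mathfrak{a}(x,\varphi)$) for all $\varphi\in\mathcal{X}$ with $\varphi\le u$; (ii) $u(x)\ge\overline{\mathfrak{a}}(x,u)$ for all $x\in\Omega$; (iii) $\overline{\mathcal{A}}(x,u,u(x))\ge0$ for all $x\in\Omega$. Analogously, if $u\in\overline{\mathcal{X}}$ with $u\le g$ on $\mathbb{R}^N\setminus\Omega$, the following are equivalent: (i') for every $x\in\Omega$, $\mathcal{A}(x,\varphi,u(x))\le0$ (equivalently $u(x)\le\mathfrak{a}(x,\varphi)$) for all $\varphi\in\mathcal{X}$ with $\varphi\ge u$; (ii') $u(x)\le\underline{\mathfrak{a}}(x,u)$ for all $x\in\Omega$; (iii') $\underline{\mathcal{A}}(x,u,u(x))\le0$ for all $x\in\Omega$.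
   Context: $\overline{\mathcal{X}}$ is the set of bounded functions $\mathbb{R}^N\to\mathbb{R}$, and $\mathcal{X}\subset\overline{\mathcal{X}}$ a fixed subset. Assumptions: (a) $\varphi_1\le\varphi_2$ implies $\mathcal{A}(x,\varphi_2,s)\le\mathcal{A}(x,\varphi_1,s)$; (b) $s_1\le s_2$ implies $\mathcal{A}(x,\varphi,s_1)\le\mathcal{A}(x,\varphi,s_2)$; (c) for every $(x,\varphi)$ the map $s\mapsto\mathcal{A}(x,\varphi,s)$ has exactly one zero, denoted $\mathfrak{a}(x,\varphi)$. For $\psi\in\overline{\mathcal{X}}$: $\overline{\mathfrak{a}}(x,\psi):=\sup\{\mathfrak{a}(x,\varphi):\varphi\in\mathcal{X},\varphi\le\psi\}$, $\underline{\mathfrak{a}}(x,\psi):=\inf\{\mathfrak{a}(x,\varphi):\varphi\in\mathcal{X},\varphi\ge\psi\}$, $\overline{\mathcal{A}}(x,\psi,s):=\inf\{\mathcal{A}(x,\varphi,s):\varphi\in\mathcal{X},\varphi\le\psi\}$, $\underline{\mathcal{A}}(x,\psi,s):=\sup\{\mathcal{A}(x,\varphi,s):\varphi\in\mathcal{X},\varphi\ge\psi\}$. (Conditions (i)/(i') are the test-function definition of viscosity super/subsolution of the DPP $\mathcal{A}(x,u,u(x))=0$ in $\Omega$, $u=g$ outside; (ii)-(iii)/(ii')-(iii') are the pointwise definition via the extended operators.) *)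

(* Defs.v *)
From HB Require Import structures.
From mathcomp Require Import all_boot all_order all_algebra.
From mathcomp Require Import all_classical all_reals all_analysis.
Set Implicit Arguments. Unset Strict Implicit. Unset Printing Implicit Defensive.
Import Order.TTheory GRing.Theory Num.Theory.
Import numFieldNormedType.Exports.
Local Open Scope classical_set_scope.
Local Open Scope ring_scope.

Definition Xbar (R : realType) (N : nat) : set ('rV[R]_N -> R) :=
  [set f | exists M : R, forall y, `|f y| <= M].

Definition fle (R : realType) (N : nat) (f g : 'rV[R]_N -> R) : Prop :=
  forall y, f y <= g y.

Definition abar (R : realType) (N : nat) (X : set ('rV[R]_N -> R))
  (a : 'rV[R]_N -> ('rV[R]_N -> R) -> R) (x : 'rV[R]_N) (psi : 'rV[R]_N -> R)
  : \bar R :=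
  ereal_sup [set (a x phi)%:E | phi in [set phi | X phi /\ fle phi psi]].

Definition aunder (R : realType) (N : nat) (X : set ('rV[R]_N -> R))
  (a : 'rV[R]_N -> ('rV[R]_N -> R) -> R) (x : 'rV[R]_N) (psi : 'rV[R]_N -> R)
  : \bar R :=
  ereal_inf [set (a x phi)%:E | phi in [set phi | X phi /\ fle psi phi]].

Definition Abar (R : realType) (N : nat) (X : set ('rV[R]_N -> R))
  (A : 'rV[R]_N -> ('rV[R]_N -> R) -> R -> R) (x : 'rV[R]_N)
  (psi : 'rV[R]_N -> R) (s : R) : \bar R :=
  ereal_inf [set (A x phi s)%:E | phi in [set phi | X phi /\ fle phi psi]].

Definition Aunder (R : realType) (N : nat) (X : set ('rV[R]_N -> R))
  (A : 'rV[R]_N -> ('rV[R]_N -> R) -> R -> R) (x : 'rV[R]_N)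
  (psi : 'rV[R]_N -> R) (s : R) : \bar R :=
  ereal_sup [set (A x phi s)%:E | phi in [set phi | X phi /\ fle psi phi]].

(* Main.v *)
Require Import Defs.
From HB Require Import structures.
From mathcomp Require Import all_boot all_order all_algebra.
From mathcomp Require Import all_classical all_reals all_analysis.
Import Order.TTheory GRing.Theory Num.Theory.
Import numFieldNormedType.Exports.
Local Open Scope classical_set_scope.
Local Open Scope ring_scope.


Lemma sup_le_iff (R : realType) (T : Type) (P : T -> Prop) (f : T -> R) (c : R) :
  (ereal_sup [set (f t)%:E | t in P] <= c%:E)%E <-> (forall t, P t -> f t <= c).
Proof.
split.
- move=> H t Pt; rewrite -lee_fin; apply: le_trans H.
  by apply: ereal_sup_ubound; exists t.
- move=> H; apply: ge_ereal_sup => _ [t Pt <-]; rewrite lee_fin; exact: H.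
Qed.

Lemma inf_ge_iff (R : realType) (T : Type) (P : T -> Prop) (f : T -> R) (c : R) :
  (c%:E <= ereal_inf [set (f t)%:E | t in P])%E <-> (forall t, P t -> c <= f t).
Proof.
split.
- move=> H t Pt; rewrite -lee_fin; apply: le_trans H _.
  by apply: ereal_inf_lbound; exists t.
- move=> H; apply: le_ereal_inf_tmp => _ [t Pt <-]; rewrite lee_fin; exact: H.
Qed.

Theorem mainTheorem5 (R : realType) (N : nat)
  (Omega : set 'rV[R]_N) (g : 'rV[R]_N -> R)
  (X : set ('rV[R]_N -> R))
  (A : 'rV[R]_N -> ('rV[R]_N -> R) -> R -> R)
  (a : 'rV[R]_N -> ('rV[R]_N -> R) -> R)
  (hOmega : open Omega)
  (hX : X `<=` @Xbar R N)
  (ha : forall x phi1 phi2 s, Omega x -> X phi1 -> X phi2 ->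
          fle phi1 phi2 -> A x phi2 s <= A x phi1 s)
  (hb : forall x phi s1 s2, Omega x -> X phi ->
          s1 <= s2 -> A x phi s1 <= A x phi s2)
  (hc : forall x phi, Omega x -> X phi ->
          A x phi (a x phi) = 0 /\ (forall s, A x phi s = 0 -> s = a x phi)) :
  (forall u : 'rV[R]_N -> R, @Xbar R N u ->
     (forall y, ~ Omega y -> g y <= u y) ->
     [<-> (forall x, Omega x -> forall phi, X phi -> fle phi u -> 0 <= A x phi (u x));
          (forall x, Omega x -> forall phi, X phi -> fle phi u -> a x phi <= u x);
          (forall x, Omega x -> (abar X a x u <= (u x)%:E)%E);
          (forall x, Omega x -> (0%:E <= Abar X A x u (u x))%E)])
  /\
  (forall u : 'rV[R]_N -> R, @Xbar R N u ->
     (forall y, ~ Omega y -> u y <= g y) ->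
     [<-> (forall x, Omega x -> forall phi, X phi -> fle u phi -> A x phi (u x) <= 0);
          (forall x, Omega x -> forall phi, X phi -> fle u phi -> u x <= a x phi);
          (forall x, Omega x -> ((u x)%:E <= aunder X a x u)%E);
          (forall x, Omega x -> (Aunder X A x u (u x) <= 0%:E)%E)]).
Proof.
have key1 : forall x phi v, Omega x -> X phi -> (0 <= A x phi v <-> a x phi <= v).
  move=> x phi v Ox Xp; have [H0 Hu] := hc x phi Ox Xp; split.
  - move=> Hv; rewrite leNgt; apply/negP => Hlt.
    have Hle : A x phi v <= 0 by rewrite -H0; apply: hb => //; exact: ltW.
    have : A x phi v = 0 by apply/eqP; rewrite eq_le Hle Hv.
    by move/Hu => E; rewrite E ltxx in Hlt.
  - by move=> Hv; rewrite -H0; apply: hb.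
have key2 : forall x phi v, Omega x -> X phi -> (A x phi v <= 0 <-> v <= a x phi).
  move=> x phi v Ox Xp; have [H0 Hu] := hc x phi Ox Xp; split.
  - move=> Hv; rewrite leNgt; apply/negP => Hlt.
    have Hle : 0 <= A x phi v by rewrite -H0; apply: hb => //; exact: ltW.
    have : A x phi v = 0 by apply/eqP; rewrite eq_le Hle Hv.
    by move/Hu => E; rewrite E ltxx in Hlt.
  - by move=> Hv; rewrite -H0; apply: hb.
split=> u _ _.
- have E12 : (forall x, Omega x -> forall phi, X phi -> fle phi u -> 0 <= A x phi (u x)) <->
             (forall x, Omega x -> forall phi, X phi -> fle phi u -> a x phi <= u x).
    by split=> H x Ox phi Xp Hp; apply/(key1 x phi (u x) Ox Xp); apply: H.
  have E23 : (forall x, Omega x -> forall phi, X phi -> fle phi u -> a x phi <= u x) <->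
             (forall x, Omega x -> (abar X a x u <= (u x)%:E)%E).
    split=> H x Ox.
    + by apply/sup_le_iff => phi [Xp Hp]; apply: H.
    + by move=> phi Xp Hp; move/sup_le_iff: (H x Ox); apply; split.
  have E14 : (forall x, Omega x -> forall phi, X phi -> fle phi u -> 0 <= A x phi (u x)) <->
             (forall x, Omega x -> (0%:E <= Abar X A x u (u x))%E).
    split=> H x Ox.
    + by apply/inf_ge_iff => phi [Xp Hp]; apply: H.
    + by move=> phi Xp Hp; move/inf_ge_iff: (H x Ox); apply; split.
  tfae; tauto.
- have E12 : (forall x, Omega x -> forall phi, X phi -> fle u phi -> A x phi (u x) <= 0) <->
             (forall x, Omega x -> forall phi, X phi -> fle u phi -> u x <= a x phi).
    by split=> H x Ox phi Xp Hp; apply/(key2 x phi (u x) Ox Xp); apply: H.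
  have E23 : (forall x, Omega x -> forall phi, X phi -> fle u phi -> u x <= a x phi) <->
             (forall x, Omega x -> ((u x)%:E <= aunder X a x u)%E).
    split=> H x Ox.
    + by apply/inf_ge_iff => phi [Xp Hp]; apply: H.
    + by move=> phi Xp Hp; move/inf_ge_iff: (H x Ox); apply; split.
  have E14 : (forall x, Omega x -> forall phi, X phi -> fle u phi -> A x phi (u x) <= 0) <->
             (forall x, Omega x -> (Aunder X A x u (u x) <= 0%:E)%E).
    split=> H x Ox.
    + by apply/sup_le_iff => phi [Xp Hp]; apply: H.
    + by move=> phi Xp Hp; move/sup_le_iff: (H x Ox); apply; split.
  tfae; tauto.
Qed.
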